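(* Let $D$ be a digraph with at least one cycle, and let $c$ and $g$ be its circumference and girth, respectively. Then $\chi_A(D)\le \left\lceil \frac{c-1}{g-1}\right\rceil+1$.
   Context: Digraphs are finite and loopless; paths and cycles are directed. The girth (resp. circumference) of a digraph is the length of a shortest (resp. longest) directed cycle. A set of vertices is acyclic if the subdigraph it induces contains no directed cycle. The dichromatic number $\chi_A(D)$ is the minimum $k$ such that $V(D)$ can be colored with $k$ colors so that every color class is acyclic. *)

(* Defs.v *)
From mathcomp Require Import all_boot.
Set Implicit Arguments. Unset Strict Implicit. Unset Printing Implicit Defensive.

Definition loopless (V : finType) (e : rel V) : Prop := forall v, ~~ e v v.

(* A directed cycle: a nonempty duplicate-free sequence [v0; ...; v_{k-1}]
   with arcs v_i -> v_{i+1} and v_{k-1} -> v0.  Its length is size s. *)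
Definition dcycle (V : finType) (e : rel V) (s : seq V) : bool :=
  [&& s != [::], uniq s & cycle e s].

Definition has_cycle (V : finType) (e : rel V) : Prop :=
  exists s, dcycle e s.

Definition is_girth (V : finType) (e : rel V) (g : nat) : Prop :=
  (exists2 s, dcycle e s & size s = g) /\
  (forall s, dcycle e s -> g <= size s).

Definition is_circumference (V : finType) (e : rel V) (c : nat) : Prop :=
  (exists2 s, dcycle e s & size s = c) /\
  (forall s, dcycle e s -> size s <= c).

Definition acyclic_set (V : finType) (e : rel V) (A : {set V}) : Prop :=
  forall s, dcycle e s -> ~ {subset s <= A}.

Definition dicolorable (V : finType) (e : rel V) (k : nat) : Prop :=
  exists f : V -> 'I_k, forall i : 'I_k, acyclic_set e [set v | f v == i].

Definition is_dichromatic_number (V : finType) (e : rel V) (chi : nat) : Prop :=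
  dicolorable e chi /\ (forall k, dicolorable e k -> chi <= k).

Definition ceil_div (m d : nat) : nat := (m + d.-1) %/ d.

(* Main.v *)
Require Import Defs.
From mathcomp Require Import all_boot.
From mathcomp Require Import zify.
Set Implicit Arguments. Unset Strict Implicit. Unset Printing Implicit Defensive.

Definition eU (V : finType) (e : rel V) (U : {set V}) : rel V :=
  fun a b => e a b && (b \in U).
Definition reach (V : finType) (e : rel V) (U : {set V}) (x v : V) : bool :=
  (x \in U) && connect (eU e U) x v.
Definition tpath (V : finType) (e : rel V) (U : {set V}) (dp : V -> nat)
  (x v : V) (d : nat) : Prop :=
  exists p, [/\ path e x p, all (fun y => y \in U) (x :: p), uniq (x :: p),
     last x p = v & dp v = d + size p].
Definition good (V : finType) (e : rel V) (dp : V -> nat) (s : seq V) : Prop :=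
  exists u w, [/\ u \in s, w \in s, e u w &
    exists p, [/\ path e w p, uniq (w :: p), last w p = u & dp u = dp w + size p]].
Definition reachX (V : finType) (e : rel V) (U X : {set V}) (v : V) : Prop :=
  exists2 x, x \in X & reach e U x v.
Definition Bprop (V : finType) (e : rel V) (U : {set V}) : Prop :=
  forall r d, r \in U -> exists dp : V -> nat,
   [/\ dp r = d, (forall v, reach e U r v -> tpath e U dp r v d) &
     (forall s, dcycle e s -> {subset s <= U} ->
        (forall v, v \in s -> reach e U r v) -> good e dp s)].
Definition Cprop (V : finType) (e : rel V) (U : {set V}) : Prop :=
  forall (X : {set V}) d, exists dp : V -> nat,
   (forall v, reachX e U X v -> exists2 x, x \in X & tpath e U dp x v d) /\
   (forall s, dcycle e s -> {subset s <= U} ->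
        (forall v, v \in s -> reachX e U X v) -> good e dp s).

Lemma good_eq (V : finType) (e : rel V) dp1 dp s :
  good e dp1 s -> {in s, dp1 =1 dp} -> good e dp s.
Proof.
move=> [u [w [us ws euw [p [p1 p2 p3 p4]]]]] E.
exists u, w; split=> //; exists p; split=> //.
by rewrite -!E.
Qed.

Lemma conn_closed (V : finType) (r : rel V) (R : {set V}) :
  (forall a b, a \in R -> r a b -> b \in R) ->
  forall x y, connect r x y -> x \in R -> y \in R.
Proof.
move=> hR x y /connectP [p pth ->]; elim: p x pth => //= z p IH x /andP [rxz pth] xR.
exact: IH pth (hR _ _ xR rxz).
Qed.

Lemma reach_trans (V : finType) (e : rel V) (U : {set V}) x a b :
  reach e U x a -> connect (eU e U) a b -> reach e U x b.
Proof. by move=> /andP [xU xa] ab; rewrite /reach xU (connect_trans xa ab). Qed.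

Lemma cycle_conn (V : finType) (e : rel V) (U : {set V}) s :
  dcycle e s -> {subset s <= U} -> {in s &, forall a b, connect (eU e U) a b}.
Proof.
move=> /and3P [_ _ cs] sU; apply: connect_cycle.
apply: (sub_in_cycle (P := fun z => z \in U)) cs.
  by move=> a b _ bU eab; rewrite /eU eab bU.
by apply/allP => z /sU.
Qed.

Lemma avoid (V : finType) (e : rel V) (U : {set V}) (R : {set V}) x v :
  (forall a b, a \in R -> eU e U a b -> b \in R) ->
  connect (eU e U) x v -> v \notin R -> connect (eU e (U :\: R)) x v.
Proof.
move=> hR /connectP [p pth ->]; elim: p x pth => [|y p IH] x /=; first by rewrite connect0.
move=> /andP [exy pth] vR.
have yR : y \notin R.
  apply/negP => yR; move/negP: vR; apply.
  by apply: (conn_closed hR) yR; apply/connectP; exists p.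
apply: (connect_trans (connect1 _)) (IH _ pth vR).
by move: exy; rewrite /eU !inE yR /= => /andP [-> ->].
Qed.

Lemma path_eU_all (V : finType) (e : rel V) (U : {set V}) x p :
  path (eU e U) x p -> all (fun y => y \in U) p.
Proof. by elim: p x => //= y p IH x /andP [/andP [_ ->] /IH]. Qed.

Lemma path_eU_sub (V : finType) (e : rel V) (U U' : {set V}) x p :
  path (eU e U) x p -> all (fun y => y \in U') p -> path (eU e U') x p.
Proof.
elim: p x => //= y p IH x /andP [/andP [exy _] pth] /andP [yU' ap].
by rewrite /eU exy yU' /= IH.
Qed.

Lemma reach_split (V : finType) (e : rel V) (U : {set V}) r v :
  reach e U r v -> v != r -> exists2 y, e r y & reach e (U :\ r) y v.
Proof.
move=> /andP [rU /connectP [p pth ->]] vr.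
case: (shortenP pth) vr => p' pth' up' _.
case: p' pth' up' => [|y q] /=; first by rewrite eqxx.
move=> /andP [/andP [ery yU] pq] /andP [rnot uq] ly.
exists y => //.
have aq : all (fun z => z \in U :\ r) (y :: q).
  apply/allP => z zin; rewrite !inE.
  have -> : z != r by apply/eqP => zr; move: rnot; rewrite -zr zin.
  move: zin; rewrite inE => /orP [/eqP -> // | zq].
  by move/allP: (path_eU_all pq) => /(_ _ zq).
rewrite /reach (allP aq y (mem_head _ _)) /=.
apply/connectP; exists q => //.
by apply: path_eU_sub pq _; move: aq => /= /andP [].
Qed.

Lemma B_step (V : finType) (e : rel V) (U : {set V}) :
  (forall U' : {set V}, #|U'| < #|U| -> Cprop e U') -> Bprop e U.
Proof.
move=> IH r d rU.
have cU : #|U :\ r| < #|U| by rewrite (cardsD1 r U) rU.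
have [dp' [H1 H2]] := IH _ cU [set y | e r y] d.+1.
pose dp := fun v => if v == r then d else dp' v.
have TP : forall v, reach e U r v -> tpath e U dp r v d.
  move=> v rv; case: (eqVneq v r) => [-> | vr].
    by exists [::]; rewrite /= rU /dp eqxx addn0.
  have [y ery ry] := reach_split rv vr.
  have yX : y \in [set y | e r y] by rewrite inE.
  have [x xX [p [p1 p2 p3 p4 p5]]] := H1 v (ex_intro2 _ _ y yX ry).
  exists (x :: p); split.
  + by rewrite /= p1 andbT; move: xX; rewrite inE.
  + rewrite [all _ _]/= rU /=; change (all (fun y => y \in U) (x :: p)).
    apply/allP => z zin.
    by move/allP: p2 => /(_ _ zin); rewrite !inE => /andP [].
  + rewrite [uniq _]/=; change ((r \notin x :: p) && uniq (x :: p)); rewrite p3 andbT; apply/negP => rin.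
    by move/allP: p2 => /(_ _ rin); rewrite !inE eqxx.
  + by [].
  + by rewrite /dp (negbTE vr) p5 /= addSnnS.
exists dp; split => //.
- by rewrite /dp eqxx.
- move=> s ds sU sr; case: (boolP (r \in s)) => [rs | rns].
    set u := prev s r.
    have us : u \in s by rewrite mem_prev.
    have eur : e u r by apply: prev_cycle => //; case/and3P: ds.
    have [p [p1 _ p3 p4 p5]] := TP u (sr u us).
    exists u, r; split=> //; exists p; split=> //.
    by rewrite p5 /dp eqxx.
  have neq : {in s, forall z, z != r}.
    by move=> z zs; apply/eqP => zr; move: rns; rewrite -zr zs.
  apply: (@good_eq _ _ dp'); last by move=> z zs; rewrite /dp (negbTE (neq z zs)).
  apply: H2 => //.
    by move=> z zs; rewrite !inE neq // sU.
  move=> z zs; have [y ery ry] := reach_split (sr z zs) (neq z zs).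
  by exists y; rewrite ?inE.
Qed.

Lemma C_step (V : finType) (e : rel V) (U : {set V}) :
  Bprop e U -> (forall U' : {set V}, #|U'| < #|U| -> Cprop e U') -> Cprop e U.
Proof.
move=> HB IH X d.
case: (pickP (fun x => (x \in X) && (x \in U))) => [x /andP [xX xU] | none]; last first.
  exists (fun _ => 0); split.
    by move=> v [x xX xr]; move: xr (none x); rewrite /reach xX => /andP [-> _].
  move=> [|v s] ds _ sr; first by case/and3P: ds.
  have [x xX xr] := sr v (mem_head _ _).
  by move: xr (none x); rewrite /reach xX => /andP [-> _].
have [dp1 [dx T1 G1]] := HB x d xU.
set R1 := [set v | reach e U x v].
set U2 := U :\: R1.
have xR1 : x \in R1 by rewrite inE /reach xU connect0.
have cU : #|U2| < #|U|.
  rewrite (cardsD1 x U) xU add1n ltnS; apply: subset_leq_card.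
  apply/subsetP => z; rewrite !inE => /andP [zR zU]; rewrite zU andbT.
  by apply/eqP => zx; move: zR; rewrite zx; move: xR1; rewrite inE => ->.
have [dp2 [T2 G2]] := IH _ cU X d.
have clo : forall a b, a \in R1 -> eU e U a b -> b \in R1.
  by move=> a b; rewrite !inE => xa ab; apply: reach_trans xa (connect1 ab).
have toU2 : forall v, reachX e U X v -> v \notin R1 -> reachX e U2 X v.
  move=> v [x' x'X /andP [x'U cv]] vR; exists x' => //.
  have x'R : x' \notin R1.
    apply/negP => x'R; move/negP: vR; apply.
    by rewrite inE; apply: reach_trans cv; move: x'R; rewrite inE.
  rewrite /reach inE x'R x'U /=; exact: avoid.
exists (fun v => if v \in R1 then dp1 v else dp2 v); split.
- move=> v rv; case: (boolP (v \in R1)) => vR.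
    have vR' : reach e U x v by move: vR; rewrite inE.
    have [p [p1 p2 p3 p4 p5]] := T1 v vR'.
    by exists x => //; exists p; split=> //; rewrite vR.
  have [x'' x''X [p [p1 p2 p3 p4 p5]]] := T2 v (toU2 v rv vR).
  exists x'' => //; exists p; split=> //; last by rewrite (negbTE vR).
  apply/allP => z zin; move/allP: p2 => /(_ _ zin).
  by rewrite !inE => /andP [].
- move=> s ds sU sr; case: (boolP (has (fun z => z \in R1) s)) => [/hasP [v vs vR] | /hasPn nR].
    have allR : {in s, forall z, z \in R1}.
      move=> z zs; rewrite inE; apply: reach_trans (cycle_conn ds sU vs zs).
      by move: vR; rewrite inE.
    apply: (@good_eq _ _ dp1); last by move=> z zs; rewrite allR.
    by apply: G1 => // z zs; move: (allR z zs); rewrite inE.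
  apply: (@good_eq _ _ dp2); last by move=> z zs; rewrite (negbTE (nR z zs)).
  apply: G2 => //.
    by move=> z zs; rewrite inE nR // sU.
  by move=> z zs; apply: toU2; [apply: sr | apply: nR].
Qed.

Lemma all_C (V : finType) (e : rel V) n (U : {set V}) : #|U| <= n -> Cprop e U.
Proof.
elim: n U => [|n IHn] U hU.
  have H : forall U' : {set V}, #|U'| < #|U| -> Cprop e U'.
    by move=> U' h; have := leq_trans h hU.
  by apply: C_step (B_step H) H.
have H : forall U' : {set V}, #|U'| < #|U| -> Cprop e U'.
  by move=> U' hU'; apply: IHn; rewrite -ltnS (leq_trans hU').
by apply: C_step (B_step H) H.
Qed.



Lemma arith a t g c : 2 <= g -> g <= t.+1 -> t.+1 <= c ->
  ((a + t) %/ (g - 1)) %% (ceil_div (c - 1) (g - 1) + 1) =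
  (a %/ (g - 1)) %% (ceil_div (c - 1) (g - 1) + 1) -> False.
Proof.
move=> g2 gt tc; rewrite /ceil_div.
set h := g - 1; have h0 : 0 < h by rewrite /h subn_gt0.
set k := (c - 1 + h.-1) %/ h.
rewrite {1}(divn_eq a h) -addnA divnMDl //.
set j := (a %% h + t) %/ h => E.
have j1 : 1 <= j.
  have H : h <= a %% h + t by rewrite (leq_trans _ (leq_addl _ _)) // /h leq_subLR add1n.
  by apply: leq_trans (leq_div2r h H); rewrite divnn h0.
have jk : j <= k.
  apply: leq_div2r; have := ltn_mod a h; rewrite h0 => hm; lia.
have : (a %/ h + j == a %/ h + 0 %[mod k + 1]) by rewrite addn0 E.
rewrite eqn_modDl mod0n modn_small ?addn1 ?ltnS // => /eqP j0.
by rewrite j0 in j1.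
Qed.

Theorem theorem3 (V : finType) (e : rel V) (chi c g : nat) :
  loopless e ->
  has_cycle e ->
  is_circumference e c ->
  is_girth e g ->
  is_dichromatic_number e chi ->
  chi <= ceil_div (c - 1) (g - 1) + 1.
Proof.
move=> hl _ [_ cmax] [[sg sgd sgs] gmin] [_ chimin].
have [dp [_ G]] := all_C e (leqnn #|[set: V]|) [set: V] 0.
have good_all : forall s, dcycle e s -> good e dp s.
  move=> s ds; apply: G => // v _; first by rewrite inE.
  by exists v; rewrite ?inE // /reach inE connect0.
have g2 : 2 <= g.
  rewrite -sgs; case: sg sgd {sgs} => [|x [|y q]] // /and3P [] //= _ _.
  by rewrite andbT (negbTE (hl x)).
set k := ceil_div (c - 1) (g - 1).
have hk : 0 < k + 1 by rewrite addn1.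
apply: chimin.
exists (fun v => Ordinal (ltn_pmod (dp v %/ (g - 1)) hk)) => i s ds sub.
have [u [w [us ws euw [p [p1 p2 p3 p4]]]]] := good_all s ds.
have dc : dcycle e (w :: p).
  by rewrite /dcycle /= -/(uniq (w :: p)) p2 rcons_path p1 p3 euw.
have gl := gmin _ dc; have cl := cmax _ dc.
move: (sub u us) (sub w ws); rewrite !inE => /eqP fu /eqP fw.
have := congr1 val (etrans fu (esym fw)); rewrite /= p4.
exact: arith g2 gl cl.
Qed.
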